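(* Suppose $\|\mathbf{T} - \mathbf{T}_0\|_\infty \leq \frac{\pi_{\min}}{\gamma_1}$. Then \begin{gather*} \max_i |\boldsymbol{\pi}(i) - \boldsymbol{\pi}_0(i)| \leq \frac{\pi_{\min}}{2}, \quad \min_i \boldsymbol{\pi}_0(i) \geq \frac{\pi_{\min}}{2}, \quad \max_i \boldsymbol{\pi}_0(i) \leq \pi_{\max} + \frac{\pi_{\min}}{2},\\ \max_i |\boldsymbol{\pi}(i)^{-\frac{1}{2}} - \boldsymbol{\pi}_0(i)^{-\frac{1}{2}}| \leq (\sqrt{2}-1) \gamma_1 \pi_{\min}^{-\frac{3}{2}} \|\mathbf{T} - \mathbf{T}_0\|_\infty,\\ \max_i |\boldsymbol{\pi}(i)^{\frac{1}{2}} - \boldsymbol{\pi}_0(i)^{\frac{1}{2}}| \leq (1-\tfrac{\sqrt{2}}{2}) \gamma_1 \pi_{\min}^{-\frac{1}{2}} \|\mathbf{T} - \mathbf{T}_0\|_\infty. \end{gather*}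
   Context: Let $\mathbf{T},\mathbf{T}_0\in\mathbb{R}^{s\times s}$ be Markov matrices with stationary distributions $\boldsymbol{\pi},\boldsymbol{\pi}_0\in\mathbb{R}^{s}$. Let $\gamma_1:=\sum_{i=2}^s\frac{1}{1-\lambda_i(\mathbf{T})}$, where $\lambda_i$ is the $i$-th largest eigenvalue; it is known that $\|\boldsymbol{\pi}-\boldsymbol{\pi}_0\|_1\le\gamma_1\|\mathbf{T}-\mathbf{T}_0\|_\infty$. Let $\pi_{\min}:=\min_i\boldsymbol{\pi}(i)$ and $\pi_{\max}:=\max_i\boldsymbol{\pi}(i)$. *)

(* Defs.v *)
From HB Require Import structures.
From mathcomp Require Import all_boot all_order all_algebra.
Set Implicit Arguments. Unset Strict Implicit. Unset Printing Implicit Defensive.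
Import Order.TTheory GRing.Theory Num.Theory.
Local Open Scope ring_scope.

Section Defs.
Variables (R : rcfType) (s : nat).

Definition markov (T : 'M[R]_s) : Prop :=
  (forall i j, 0 <= T i j) /\ (forall i, \sum_(j < s) T i j = 1).

Definition stationary (T : 'M[R]_s) (p : 'rV[R]_s) : Prop :=
  (forall i, 0 <= p 0 i) /\ \sum_(i < s) p 0 i = 1 /\ p *m T = p.

Definition mxnorm_inf (A : 'M[R]_s) : R :=
  \big[Num.max/0]_(i < s) \sum_(j < s) `|A i j|.

Definition vnorm1 (v : 'rV[R]_s) : R := \sum_(i < s) `|v 0 i|.

(* Minimum / maximum entry of a probability vector (s > 0). Defaults 1 and 0
   are harmless: entries of a probability vector lie in [0,1]. *)
Definition pmin (p : 'rV[R]_s) : R := \big[Num.min/1]_(i < s) p 0 i.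
Definition pmax (p : 'rV[R]_s) : R := \big[Num.max/0]_(i < s) p 0 i.

Definition sorted_spectrum (T : 'M[R]_s) (lam : 'I_s -> R) : Prop :=
  char_poly T = \prod_(i < s) ('X - (lam i)%:P) /\
  (forall i j : 'I_s, (i <= j)%N -> lam j <= lam i).

(* gamma_1 = sum_{i>=2} 1/(1 - lambda_i)  (0-based: indices i >= 1). *)
Definition gamma1 (lam : 'I_s -> R) : R :=
  \sum_(i < s | (0 < i)%N) (1 - lam i)^-1.

End Defs.

(* Main.v *)
Require Import Defs.
From HB Require Import structures.
From mathcomp Require Import all_boot all_order all_algebra.
From mathcomp Require Import ring lra.
Import Order.TTheory GRing.Theory Num.Theory.
Local Open Scope ring_scope.

Lemma key5 (R : rcfType) (a b m D : R) : 0 < m -> m <= a -> 0 <= b -> `|a - b| <= D / 2 -> D <= m ->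
  `|Num.sqrt a - Num.sqrt b| * Num.sqrt m <= (1 - Num.sqrt 2 / 2) * D /\
  `|(Num.sqrt a)^-1 - (Num.sqrt b)^-1| * (m * Num.sqrt m) <= (Num.sqrt 2 - 1) * D * 1.
Proof.
move=> m0 ma b0 hab hD.
have a0 : 0 <= a by lra.
have bm : m <= 2 * b.
  have := ler_norm (a - b); lra.
set x := Num.sqrt a; set y := Num.sqrt b; set q := Num.sqrt m; set r := Num.sqrt 2.
have hx : x ^+ 2 = a by rewrite sqr_sqrtr.
have hy : y ^+ 2 = b by rewrite sqr_sqrtr.
have hq : q ^+ 2 = m by rewrite sqr_sqrtr // ltW.
have hr : r ^+ 2 = 2 by rewrite sqr_sqrtr.
have q0 : 0 < q by rewrite sqrtr_gt0.
have r1 : 1 < r by rewrite -sqrtr1 ltr_sqrt //; lra.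
have x0 : 0 <= x := sqrtr_ge0 _.
have y0 : 0 <= y := sqrtr_ge0 _.
have xq : q <= x by rewrite ler_sqrt.
have yq : q <= r * y by rewrite -sqrtrM ?ler_sqrt //; lra.
have ypos : 0 < y by nra.
have xpos : 0 < x by lra.
set e := `|x - y|.
have e0 : 0 <= e := normr_ge0 _.
have exy : e * (x + y) = `|a - b|.
  rewrite -hx -hy /e -(ger0_norm (addr_ge0 x0 y0)) -normrM; congr `|_|; ring.
have h1 : e * (x + y) <= D / 2 by rewrite exy.
have h2 : q * (r + 1) <= r * (x + y) by nra.
split.
  have h3 : e * q * (r + 1) <= r * D / 2 by nra.
  have h4 : e * q * (r + 1) * (r - 1) <= r * D / 2 * (r - 1) by apply: ler_wpM2r => //; lra.
  have rr : (r + 1) * (r - 1) = 1 by rewrite mulrC -subr_sqr hr; ring.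
  rewrite -mulrA rr mulr1 in h4.
  nra.
have -> : x^-1 - y^-1 = (y - x) / (x * y) by field; lra.
rewrite normrM normfV distrC (gtr0_norm (mulr_gt0 xpos ypos)) -/e.
rewrite mulr1 -mulrA mulrCA ler_pdivrMl ?mulr_gt0 //.
have h5a : q * q <= x * (r * y) by apply: ler_pM => //; lra.
have h5b : q * (r + 1) <= r * x + r * y by nra.
have h5c : q * q * (q * (r + 1)) <= x * (r * y) * (r * x + r * y) by apply: ler_pM => //; nra.
have h5 : q * q * q * (r + 1) <= 2 * x * y * (x + y).
  have -> : 2 * x * y * (x + y) = x * (r * y) * (r * x + r * y) by rewrite -hr; ring.
  by rewrite -mulrA.
have h6a : e * (q * q * q * (r + 1)) <= e * (2 * x * y * (x + y)) by apply: ler_wpM2l.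
have h6b : (x * y) * (e * (x + y)) <= (x * y) * (D / 2) by apply: ler_wpM2l => //; nra.
have h6 : e * (q * q * q) * (r + 1) <= x * y * D by nra.
have h7 : e * (q * q * q) * (r + 1) * (r - 1) <= x * y * D * (r - 1) by apply: ler_wpM2r => //; lra.
have rr : (r + 1) * (r - 1) = 1 by rewrite mulrC -subr_sqr hr; ring.
rewrite -mulrA rr mulr1 in h7.
have -> : m * q = q * q * q by rewrite -hq; ring.
nra.
Qed.

Theorem corollary1 (R : rcfType) (s : nat) (T T0 : 'M[R]_s)
    (pi pi0 : 'rV[R]_s) (lam : 'I_s -> R) :
  (0 < s)%N ->
  markov T -> markov T0 ->
  stationary T pi -> stationary T0 pi0 ->
  sorted_spectrum T lam ->
  (forall i : 'I_s, (0 < i)%N -> lam i < 1) ->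
  (* the known perturbation bound ||pi - pi0||_1 <= gamma_1 ||T - T0||_inf *)
  vnorm1 (pi - pi0) <= gamma1 lam * mxnorm_inf (T - T0) ->
  mxnorm_inf (T - T0) <= pmin pi / gamma1 lam ->
  (forall i, `|pi 0 i - pi0 0 i| <= pmin pi / 2) /\
  (forall i, pmin pi / 2 <= pi0 0 i) /\
  (forall i, pi0 0 i <= pmax pi + pmin pi / 2) /\
  (forall i, `|(Num.sqrt (pi 0 i))^-1 - (Num.sqrt (pi0 0 i))^-1|
              <= (Num.sqrt 2 - 1) * gamma1 lam
                 * (pmin pi * Num.sqrt (pmin pi))^-1 * mxnorm_inf (T - T0)) /\
  (forall i, `|Num.sqrt (pi 0 i) - Num.sqrt (pi0 0 i)|
              <= (1 - Num.sqrt 2 / 2) * gamma1 lam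
                 * (Num.sqrt (pmin pi))^-1 * mxnorm_inf (T - T0)).
Proof.
move=> s0 _ _ [pi_ge0 [pi_sum _]] [pi0_ge0 [pi0_sum _]] _ lam1 hl1 hN.
set m := pmin pi in hN *; set g := gamma1 lam in hl1 hN *;
set N := mxnorm_inf (T - T0) in hl1 hN *.
have m0 : 0 <= m by rewrite /m /pmin; elim/big_ind: _ => //= x y hx hy; rewrite le_min hx hy.
have mle : forall i, m <= pi 0 i by move=> i; rewrite /m /pmin (bigD1 i) //= ge_min lexx.
have maxle : forall i, pi 0 i <= pmax pi by move=> i; rewrite /pmax (bigD1 i) //= le_max lexx.
have N0 : 0 <= N by rewrite /N /mxnorm_inf; elim/big_ind: _ => //= [x y hx hy|i _];
  [rewrite le_max hx | apply: sumr_ge0 => j _].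
have g0 : 0 <= g by rewrite /g /gamma1; apply: sumr_ge0 => i hi; rewrite invr_ge0 subr_ge0 ltW // lam1.
set D := g * N in hl1 *.
have D0 : 0 <= D by rewrite mulr_ge0.
have DN : D <= m.
  rewrite /D; have [->|gpos] := eqVneq g 0; first by rewrite mul0r.
  have gp : 0 < g by rewrite lt_def gpos g0.
  by rewrite mulrC -ler_pdivlMr.
have hd : forall i, `|pi 0 i - pi0 0 i| <= D / 2.
  move=> i.
  have e1 : vnorm1 (pi - pi0) = \sum_j `|pi 0 j - pi0 0 j| by apply: eq_bigr => j _; rewrite !mxE.
  have e2 : \sum_j (pi 0 j - pi0 0 j) = 0 by rewrite sumrB pi_sum pi0_sum subrr.
  rewrite e1 (bigD1 i) //= in hl1.
  rewrite (bigD1 i) //= in e2.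
  have e3 : pi 0 i - pi0 0 i = - \sum_(j < s | j != i) (pi 0 j - pi0 0 j) by apply/eqP; rewrite -subr_eq0 opprK e2.
  have := ler_norm_sum (index_enum 'I_s) (fun j => pi 0 j - pi0 0 j) (fun j => j != i).
  rewrite -normrN -e3 => h.
  lra.
have hd2 : forall i, `|pi 0 i - pi0 0 i| <= m / 2 by move=> i; have := hd i; lra.
have hlo : forall i, m / 2 <= pi0 0 i.
  by move=> i; have := hd2 i; have := mle i; have := ler_norm (pi 0 i - pi0 0 i); lra.
split; first exact: hd2.
split; first exact: hlo.
split.
  by move=> i; have := hd2 i; have := maxle i; have := ler_norm (pi0 0 i - pi 0 i); rewrite distrC; lra.
have [m0'|mpos] := eqVneq m 0.
  have De : D = 0 by lra.
  have eq : forall i, pi 0 i = pi0 0 i.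
    by move=> i; apply/eqP; rewrite -subr_eq0 -normr_le0; have := hd i; rewrite De mul0r.
  split => i; rewrite eq subrr normr0; apply: mulr_ge0 => //;
    (apply: mulr_ge0 => //; [apply: mulr_ge0 => // | rewrite invr_ge0 ?mulr_ge0 ?sqrtr_ge0 //]).
  1,2: have r2 : Num.sqrt 2 ^+ 2 = 2 :> R by rewrite sqr_sqrtr.
  1,2: have r1 : 1 < Num.sqrt 2 :> R by rewrite -[X in X < _]sqrtr1 ltr_sqrt //; lra.
  1,2: nra.
have mp : 0 < m by rewrite lt_def mpos m0.
split => i; have [k5 k4] := @key5 R _ _ _ _ mp (mle i) (pi0_ge0 i) (hd i) DN.
- have -> : (Num.sqrt 2 - 1) * g / (m * Num.sqrt m) * N = ((Num.sqrt 2 - 1) * D * 1) / (m * Num.sqrt m)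
    by rewrite /D; ring.
  by rewrite ler_pdivlMr ?mulr_gt0 ?sqrtr_gt0.
- have -> : (1 - Num.sqrt 2 / 2) * g / Num.sqrt m * N = ((1 - Num.sqrt 2 / 2) * D) / Num.sqrt m
    by rewrite /D; ring.
  by rewrite ler_pdivlMr ?mulr_gt0 ?sqrtr_gt0.
Qed.
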